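(* Let $\rho$ be a growth function and $m\ge2$ an integer. Let $\sigma=(\sigma_1,\dots,\sigma_m)\in\{-1,1\}^m$ with $\sigma_i=-1$ and $\sigma_{i+1}=1$ for some $1\le i\le m-1$, and let $\phi\in\{-1,1\}^m$ be given by $\phi_i=1$, $\phi_{i+1}=-1$, and $\phi_j=\sigma_j$ for $j\notin\{i,i+1\}$. If $f^\rho_\sigma=(a_\sigma,b_\sigma)$ and $f^\rho_\phi=(a_\phi,b_\phi)$, then $a_\sigma\le a_\phi$ and $b_\sigma=b_\phi$.
   Context: A growth function is an increasing $\rho:\mathbb{R}\to\mathbb{R}^{\ge0}$. Binary strings are elements of $\{-1,1\}^m$ (the empty string $<>$ for $m=0$); $\sigma\wedge u$ denotes concatenation. $f^\rho_\sigma\in\mathbb{R}^2$ is defined recursively: $f^\rho_{<>}=(0,0)$, and if $f^\rho_\sigma=(a,b)$ then $f^\rho_{\sigma\wedge1}=(a+1,b+1)$ and $f^\rho_{\sigma\wedge-1}=(a+\rho(a+b),b-1)$. *)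

(* Defs.v *)
From Stdlib Require Import Reals List ZArith.
Import ListNotations.
Open Scope R_scope.

Definition growth_function (rho : R -> R) : Prop :=
  (forall x y, x <= y -> rho x <= rho y) /\ (forall x, 0 <= rho x).

Definition binary_string (s : list Z) : Prop :=
  Forall (fun u => u = 1%Z \/ u = (-1)%Z) s.

Definition f_step (rho : R -> R) (p : R * R) (u : Z) : R * R :=
  let (a, b) := p in
  if Z.eqb u 1 then (a + 1, b + 1) else (a + rho (a + b), b - 1).

Definition f_rho (rho : R -> R) (s : list Z) : R * R :=
  fold_left (f_step rho) s (0, 0).

(* Main.v *)
Require Import Defs.
From Stdlib Require Import Reals List ZArith Lia Lra.
Import ListNotations.
Open Scope R_scope.

Lemma decomp (s : list Z) : forall k, (S k < length s)%nat ->
  s = firstn k s ++ nth k s 0%Z :: nth (S k) s 0%Z :: skipn (S (S k)) s.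
Proof.
  induction s as [|x s IH]; intros k Hk; simpl in Hk; [lia|].
  destruct k as [|k].
  - destruct s as [|y s]; simpl in *; [lia|reflexivity].
  - simpl. f_equal. apply IH. lia.
Qed.

Lemma mono rho : growth_function rho -> forall l p q,
  fst p <= fst q -> snd p = snd q ->
  fst (fold_left (f_step rho) l p) <= fst (fold_left (f_step rho) l q) /\
  snd (fold_left (f_step rho) l p) = snd (fold_left (f_step rho) l q).
Proof.
  intros [Hm Hp] l. induction l as [|u l IH]; intros [a b] [c d] H1 H2; simpl in *.
  - split; assumption.
  - apply IH; unfold f_step; destruct (Z.eqb u 1); simpl; subst; try lra.
    assert (rho (a + d) <= rho (c + d)) by (apply Hm; lra). lra.
Qed.

(* Index i is 1-based as in the paper: sigma_i = nth (i-1), sigma_{i+1} = nth i. *)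
Theorem mainTheorem16 (rho : R -> R) (m : nat) (sigma phi : list Z) (i : nat) :
  growth_function rho ->
  (2 <= m)%nat ->
  binary_string sigma -> length sigma = m ->
  binary_string phi -> length phi = m ->
  (1 <= i)%nat -> (i <= m - 1)%nat ->
  nth (i - 1) sigma 0%Z = (-1)%Z -> nth i sigma 0%Z = 1%Z ->
  nth (i - 1) phi 0%Z = 1%Z -> nth i phi 0%Z = (-1)%Z ->
  (forall j, (j < m)%nat -> j <> (i - 1)%nat -> j <> i -> nth j phi 0%Z = nth j sigma 0%Z) ->
  fst (f_rho rho sigma) <= fst (f_rho rho phi) /\
  snd (f_rho rho sigma) = snd (f_rho rho phi).
Proof.
  intros Hg Hm _ Hls _ Hlp Hi1 Hi2 s1 s2 p1 p2 Heq.
  destruct i as [|k]; [lia|]. simpl in *. rewrite Nat.sub_0_r in *.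
  assert (E1 : firstn k sigma = firstn k phi).
  { apply nth_ext with (d := 0%Z) (d' := 0%Z).
    - rewrite !firstn_length. lia.
    - intros n Hn. rewrite firstn_length in Hn.
      rewrite !nth_firstn. destruct (Nat.ltb_spec n k); [|reflexivity].
      symmetry. apply Heq; lia. }
  assert (E2 : skipn (S (S k)) sigma = skipn (S (S k)) phi).
  { apply nth_ext with (d := 0%Z) (d' := 0%Z).
    - rewrite !skipn_length. lia.
    - intros n Hn. rewrite skipn_length in Hn.
      rewrite !nth_skipn. symmetry. apply Heq; lia. }
  unfold f_rho.
  rewrite (decomp sigma k) by lia. rewrite (decomp phi k) by lia.
  rewrite s1, s2, p1, p2, E1, E2, !fold_left_app.
  simpl fold_left. apply (mono rho Hg).
  destruct (fold_left (f_step rho) (firstn k phi) (0, 0)) as [a b].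
  simpl. destruct Hg as [Hmo _].
  assert (rho (a + b) <= rho (a + 1 + (b + 1))) by (apply Hmo; lra).
  lra.
  destruct (fold_left (f_step rho) (firstn k phi) (0, 0)) as [a b].
  simpl. lra.
Qed.
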